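(* There exists a $4$-colored tiling of $\mathbb{R}^3$ all of whose tiles have volume $1$ and whose minimal distance equals $(12+8\sqrt2)^{-1/3}\approx0.350$.
   Context: A $k$-colored tiling of $\mathbb{R}^3$ is a locally finite collection of closed bounded connected tiles covering $\mathbb{R}^3$, distinct tiles intersecting only in their boundaries, each tile assigned one of $k$ colors. The minimal distance is the infimum of the Euclidean distances $|x-y|$ over $x\in T_i$, $y\in T_j$ with $i\neq j$ and $T_i,T_j$ of the same color. *)

(* Defs.v *)
From HB Require Import structures.
From mathcomp Require Import all_boot all_order all_algebra.
From mathcomp Require Import all_classical all_reals all_analysis.
Set Implicit Arguments. Unset Strict Implicit. Unset Printing Implicit Defensive.
Import Order.TTheory GRing.Theory Num.Theory.
Import numFieldNormedType.Exports.
Local Open Scope classical_set_scope.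
Local Open Scope ring_scope.

(* Points of R^3, as triples ((x, y), z).  The topology is the product
   topology (= the Euclidean one). *)
Definition pt3 (R : realType) := (R * R * R)%type.

Definition dist3 (R : realType) (p q : pt3 R) : R :=
  Num.sqrt ((p.1.1 - q.1.1) ^+ 2 + (p.1.2 - q.1.2) ^+ 2 + (p.2 - q.2) ^+ 2).

Definition vol3 (R : realType) (A : set (pt3 R)) : \bar R :=
  ((@lebesgue_measure R \x @lebesgue_measure R) \x @lebesgue_measure R)%E
    (A : set (measurableTypeR R * measurableTypeR R * measurableTypeR R)).

Definition bdry (R : realType) (A : set (pt3 R)) : set (pt3 R) :=
  closure A `\` A^°.

Definition bounded3 (R : realType) (A : set (pt3 R)) : Prop :=
  exists (c : pt3 R) (r : R), forall p, A p -> dist3 c p <= r.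

Definition locally_finite3 (R : realType) (I : Type) (T : I -> set (pt3 R)) : Prop :=
  forall x : pt3 R, exists2 r : R, 0 < r &
    finite_set [set i | exists2 p, T i p & dist3 x p < r].

Definition tiling3 (R : realType) (I : Type) (T : I -> set (pt3 R)) : Prop :=
  [/\ locally_finite3 T,
      (forall i, closed (T i) /\ bounded3 (T i) /\ connected (T i)),
      (forall p : pt3 R, exists i, T i p) &
      (forall i j, i <> j -> T i `&` T j `<=` bdry (T i) `&` bdry (T j))].

Definition min_dist (R : realType) (I : Type) (k : nat)
    (T : I -> set (pt3 R)) (col : I -> 'I_k) : R :=
  inf [set d : R | exists i j (x y : pt3 R),
        [/\ i <> j, col i = col j, T i x, T j y & d = dist3 x y]].

(* Main.v *)
Require Import Defs.
From HB Require Import structures.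
From mathcomp Require Import all_boot all_order all_algebra.
From mathcomp Require Import all_classical all_reals all_analysis.
From mathcomp Require Import zify ring lra.
Set Implicit Arguments. Unset Strict Implicit. Unset Printing Implicit Defensive.
Import Order.TTheory GRing.Theory Num.Theory.
Import numFieldNormedType.Exports.
Local Open Scope classical_set_scope.
Local Open Scope ring_scope.
Local Open Scope ring_scope.
Definition box (R : realType) (x0 y0 z0 A B C : R) : set (pt3 R) :=
  (`[x0, x0 + A] `*` `[y0, y0 + B]) `*` `[z0, z0 + C].

Lemma vol_box (R : realType) (x0 y0 z0 A B C : R) : 0 < A -> 0 < B -> 0 < C ->
  vol3 (box x0 y0 z0 A B C) = (A * B * C)%:E.
Proof.
move=> A0 B0 C0.
rewrite /vol3 /box.
etransitivity; first apply: product_measure1E.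
- apply: measurableX; exact: measurable_itv.
- exact: measurable_itv.
set X := (X in (X * _)%E).
have -> : X = (lebesgue_measure `[x0, (x0 + A)%R] * lebesgue_measure `[y0, (y0 + B)%R])%E.
  by apply: product_measure1E; exact: measurable_itv.
set Y := (Y in (_ * Y)%E).
have -> : Y = C%:E.
  have := lebesgue_measure_itv (R:=R) `[z0, (z0+C)]%R.
  rewrite /= lte_fin ltrDl C0 -EFinD addrAC subrr add0r => H; exact: H.
have HA := lebesgue_measure_itv (R:=R) `[x0, (x0+A)]%R.
have HB := lebesgue_measure_itv (R:=R) `[y0, (y0+B)]%R.
rewrite /= lte_fin ltrDl A0 -EFinD addrAC subrr add0r in HA.
rewrite /= lte_fin ltrDl B0 -EFinD addrAC subrr add0r in HB.
rewrite HA HB.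
by rewrite -!EFinM.
Qed.
Local Open Scope ring_scope.
Lemma sqrt_ge_abs (R : realType) (u v w : R) : `|u| <= Num.sqrt (u ^+ 2 + v ^+ 2 + w ^+ 2).
Proof.
rewrite -sqrtr_sqr; apply: ler_wsqrtr.
by rewrite -addrA lerDl addr_ge0 // sqr_ge0.
Qed.

Lemma dist3_x (R : realType) (p q : pt3 R) : `|p.1.1 - q.1.1| <= dist3 p q.
Proof. exact: sqrt_ge_abs. Qed.
Lemma dist3_y (R : realType) (p q : pt3 R) : `|p.1.2 - q.1.2| <= dist3 p q.
Proof. rewrite /dist3 (addrC (_ ^+ 2) (_ ^+ 2)); exact: sqrt_ge_abs. Qed.
Lemma dist3_z (R : realType) (p q : pt3 R) : `|p.2 - q.2| <= dist3 p q.
Proof. rewrite /dist3 [X in Num.sqrt X]addrC addrA; exact: sqrt_ge_abs. Qed.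

Lemma sep (R : realType) (u u0 v v0 L g : R) : 0 <= g -> u0 <= u <= u0 + L -> v0 <= v <= v0 + L ->
  L + g <= `|u0 - v0| -> g <= `|u - v|.
Proof.
move=> g0 /andP[h1 h2] /andP[h3 h4].
case: (lerP 0 (u0 - v0)) => h; [rewrite (ger0_norm h)|rewrite (ltr0_norm h)] => H.
- have : 0 <= u - v by lra.
  move=> h'; rewrite (ger0_norm h'); lra.
- have : u - v <= 0 by lra.
  move=> h'; rewrite (ler0_norm h'); lra.
Qed.
Local Open Scope ring_scope.
Definition cc (R : realType) : R := (12 + 8 * Num.sqrt 2) `^ (- (3^-1)).

Lemma cc_gt0 (R : realType) : 0 < cc R.
Proof. apply: powR_gt0; have := sqrtr_ge0 (2:R); lra. Qed.

Lemma cc_le (R : realType) : cc R <= 2^-1.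
Proof.
have s0 : 12 <= (12 + 8 * Num.sqrt 2 : R) by have := sqrtr_ge0 (2:R); lra.
have c3 : cc R ^+ 3 = (12 + 8 * Num.sqrt 2)^-1.
  rewrite -powR_mulrn; last exact/ltW/cc_gt0.
  rewrite /cc -powRrM mulNr mulVf ?pnatr_eq0 // powRN powRr1 //; lra.
have h : cc R ^+ 3 <= 8^-1.
  rewrite c3 lef_pV2 ?posrE; lra.
have := cc_gt0 R; move: h; set c := cc R => h cp.
rewrite !exprS expr0 mulr1 in h.
nra.
Qed.
Local Open Scope ring_scope.
Lemma lt4 (e : int) : (`|(e %% 4)%Z| < 4)%N.
Proof. lia. Qed.
Lemma intcomb (m r k m' r' k' : int) : (m, r, k) <> (m', r', k') ->
  `|((m + 2 * r - k) %% 4)%Z|%N = `|((m' + 2 * r' - k') %% 4)%Z|%N ->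
  2 <= `|k - k'| \/ 3 <= `|(2 * r + k) - (2 * r' + k')| \/ 5 <= `|(4 * m + 2 * r + k) - (4 * m' + 2 * r' + k')|.
Proof.
move=> hne hc.
have : ~ (m = m' /\ r = r' /\ k = k') by move=> [h1 [h2 h3]]; apply: hne; rewrite h1 h2 h3.
lia.
Qed.

Lemma in_box (R : realType) (x0 y0 z0 A B C : R) (p : pt3 R) :
  box x0 y0 z0 A B C p <->
  [/\ x0 <= p.1.1 <= x0 + A, y0 <= p.1.2 <= y0 + B & z0 <= p.2 <= z0 + C].
Proof. case: p => [[x y] z]; rewrite /box /setX /= !in_itv /=; split; [by case=> [[-> ->] ->]|by case=> -> -> ->]. Qed.

Lemma scaled (R : realType) (s : R) (x y : int) : 0 <= s ->
  `|s * x%:~R - s * y%:~R| = s * (`|x - y|)%:~R.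
Proof. by move=> s0; rewrite -mulrBr -intrB normrM (ger0_norm s0) intr_norm. Qed.

Definition I3 := (int * int * int)%type.
Definition aa (R : realType) : R := (cc R)^-1.
Definition xo (R : realType) (i : I3) : R := aa R / 4 * (4 * i.1.1 + 2 * i.1.2 + i.2)%:~R.
Definition yo (R : realType) (i : I3) : R := 2^-1 * (2 * i.1.2 + i.2)%:~R.
Definition zo (R : realType) (i : I3) : R := cc R * i.2%:~R.
Definition tile (R : realType) (i : I3) : set (pt3 R) :=
  box (xo R i) (yo R i) (zo R i) (aa R) 1 (cc R).
Definition col (i : I3) : 'I_4 := inord (`|((i.1.1 + 2 * i.1.2 - i.2) %% 4)%Z|%N).

Lemma colE (i j : I3) : col i = col j ->
  `|((i.1.1 + 2 * i.1.2 - i.2) %% 4)%Z|%N = `|((j.1.1 + 2 * j.1.2 - j.2) %% 4)%Z|%N.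
Proof. by move=> /(congr1 val); rewrite /col /= !inordK // lt4. Qed.

Lemma aa_facts (R : realType) : 0 < aa R /\ cc R <= aa R / 4.
Proof.
have c0 := cc_gt0 R; have c2 := cc_le R.
have ha : cc R * aa R = 1 by rewrite /aa mulfV // gt_eqF.
have a0 : 0 < aa R by rewrite /aa invr_gt0.
split => //; nra.
Qed.

Lemma lower (R : realType) (i j : I3) (p q : pt3 R) : i <> j -> col i = col j ->
  tile i p -> tile j q -> cc R <= dist3 p q.
Proof.
have c0 := cc_gt0 R; have c2 := cc_le R; have [a0 ac] := aa_facts R.
move=> hne /colE hcol /in_box [hx hy hz] /in_box [hx' hy' hz'].
move: hne hcol hx hy hz hx' hy' hz'.
case: i => [[m r] k]; case: j => [[m' r'] k']; rewrite /xo /yo /zo /= => hne hcol hx hy hz hx' hy' hz'.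
case: (intcomb hne hcol) => [h|[h|h]].
- apply: le_trans (dist3_z p q); apply: (sep _ hz hz'); first exact: ltW.
  rewrite scaled; last exact: ltW.
  have : (2 : R) <= (`|k - k'|)%:~R by rewrite [leLHS](_ : _ = (2:int)%:~R) // ler_int.
  move=> h2; apply: le_trans (_ : cc R * 2 <= _); first lra.
  by rewrite ler_wpM2l // ltW.
- apply: le_trans (dist3_y p q); apply: (sep _ hy hy'); first exact: ltW.
  rewrite scaled; last lra.
  have : (3 : R) <= (`|2 * r + k - (2 * r' + k')|)%:~R by rewrite [leLHS](_ : _ = (3:int)%:~R) // ler_int.
  move=> h2; apply: le_trans (_ : 2^-1 * 3 <= _); first lra.
  by rewrite ler_wpM2l //; lra.
- apply: le_trans (dist3_x p q); apply: (sep _ hx hx'); first exact: ltW.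
  rewrite scaled; last lra.
  have : (5 : R) <= (`|4 * m + 2 * r + k - (4 * m' + 2 * r' + k')|)%:~R by rewrite [leLHS](_ : _ = (5:int)%:~R) // ler_int.
  move=> h2; apply: le_trans (_ : aa R / 4 * 5 <= _); first lra.
  by rewrite ler_wpM2l //; lra.
Qed.

Lemma md (R : realType) : min_dist (@tile R) col = cc R.
Proof.
have c0 := cc_gt0 R.
rewrite /min_dist; set S := [set d : R | _].
have lb : lbound S (cc R).
  by move=> d [i [j [x [y [hij hc hx hy ->]]]]]; exact: lower hij hc hx hy.
have Sc : S (cc R).
  pose i0 : I3 := (0, 0, 0); pose j0 : I3 := (0, -1, 2).
  exists i0, j0, (xo R i0, yo R i0, zo R i0 + cc R), (xo R j0, yo R j0, zo R j0); split.
  - by [].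
  - by apply/val_inj; rewrite /col /= !inordK.
  - by have [a0 _] := aa_facts R; apply/in_box => /=; split; lra.
  - by have [a0 _] := aa_facts R; apply/in_box => /=; split; lra.
  - have -> : xo R j0 = xo R i0 by rewrite /xo.
    have -> : yo R j0 = yo R i0 by rewrite /yo.
    have -> : zo R j0 = zo R i0 + 2 * cc R.
      by rewrite /zo /= mulr0 add0r mulrC.
    rewrite /dist3 /= subrr expr0n /= add0r (_ : zo R i0 + cc R - (zo R i0 + 2 * cc R) = - cc R); last lra.
    by rewrite sqrrN subrr expr0n /= add0r sqrtr_sqr gtr0_norm.
apply/le_anti/andP; split.
- by apply: (ge_inf _ Sc); exists (cc R).
- by apply: lb_le_inf => //; exists (cc R).
Qed.
Lemma fst_cont (T U : topologicalType) : continuous (@fst T U).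
Proof. move=> [x y]; exact: cvg_fst. Qed.
Lemma snd_cont (T U : topologicalType) : continuous (@snd T U).
Proof. move=> [x y]; exact: cvg_snd. Qed.
Lemma closedX' (T U : topologicalType) (A : set T) (B : set U) :
  closed A -> closed B -> closed (A `*` B).
Proof.
move=> cA cB.
have -> : A `*` B = (fst @^-1` A) `&` (snd @^-1` B) by [].
apply: closedI; apply: preimage_closed => //; move=> x _; [exact: fst_cont|exact: snd_cont].
Qed.
Lemma pair_l_cont (T U : topologicalType) (b : U) : continuous (fun a : T => (a, b)).
Proof. move=> a; apply: cvg_pair => /=; [exact: cvg_id|exact: cvg_cst]. Qed.
Lemma pair_r_cont (T U : topologicalType) (a : T) : continuous (fun b : U => (a, b)).
Proof. move=> b; apply: cvg_pair => /=; [exact: cvg_cst|exact: cvg_id]. Qed.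
Lemma connectedX' (T U : topologicalType) (A : set T) (B : set U) :
  connected A -> connected B -> connected (A `*` B).
Proof.
move=> cA cB.
have [->|/set0P [a0 Aa0]] := eqVneq A set0.
  by rewrite set0X; exact: connected0.
have [->|/set0P [b0 Bb0]] := eqVneq B set0.
  by rewrite setX0; exact: connected0.
pose C a := ((fun y => (a, y)) @` B) `|` ((fun x => (x, b0)) @` A).
have -> : A `*` B = \bigcup_(a in A) C a.
  apply/seteqP; split.
  - move=> [x y] [/= Ax By]; exists x => //; left; by exists y.
  - move=> z [a Aa [[y By <-]|[x Ax <-]]]; by split.
apply: bigcup_connected.
  exists (a0, b0) => a Aa; right; by exists a0.
move=> a Aa; apply: connectedU.
- exists (a, b0); split; [by exists b0|by exists a].
- apply: connected_continuous_connected cB _.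
  exact/continuous_subspaceT/pair_r_cont.
- apply: connected_continuous_connected cA _.
  exact/continuous_subspaceT/pair_l_cont.
Qed.
Lemma nbhs_two (R : realType) (S : set R) (x : R) : nbhs x S ->
  exists e, 0 < e /\ S (x - e) /\ S (x + e).
Proof.
move=> /nbhs_ballP [e e0 he]; exists (e / 2); split; first by apply: divr_gt0.
have e0' : 0 < e by [].
split; apply: he; rewrite /ball /=.
- rewrite (_ : x - (x - e / 2) = e / 2); last by ring.
  rewrite gtr0_norm; [lra|exact: divr_gt0].
- rewrite (_ : x - (x + e / 2) = - (e / 2)); last by ring.
  rewrite normrN gtr0_norm; [lra|exact: divr_gt0].
Qed.

Lemma interior_strict (R : realType) (x0 y0 z0 A B C : R) (p : pt3 R) :
  (box x0 y0 z0 A B C)^° p ->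
  [/\ x0 < p.1.1 < x0 + A, y0 < p.1.2 < y0 + B & z0 < p.2 < z0 + C].
Proof.
case: p => [[x y] z] /= hp.
have hx : nbhs x ((fun t => ((t, y), z)) @^-1` box x0 y0 z0 A B C).
  have ct : continuous (fun t : R => ((t, y), z) : pt3 R).
    move=> t; have := @continuous_comp _ _ _ _ _ t (@pair_l_cont R R y t) (@pair_l_cont _ R z _). exact.
  exact: ct x _ hp.
have hy : nbhs y ((fun t => ((x, t), z)) @^-1` box x0 y0 z0 A B C).
  have ct : continuous (fun t : R => ((x, t), z) : pt3 R).
    move=> t; have := @continuous_comp _ _ _ _ _ t (@pair_r_cont R R x t) (@pair_l_cont _ R z _). exact.
  exact: ct y _ hp.
have hz : nbhs z ((fun t => ((x, y), t)) @^-1` box x0 y0 z0 A B C).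
  have ct : continuous (fun t : R => ((x, y), t) : pt3 R).
    exact: pair_r_cont.
  exact: ct z _ hp.
have [ex [ex0 [/in_box [/= h1 _ _] /in_box [/= h2 _ _]]]] := nbhs_two hx.
have [ey [ey0 [/in_box [/= _ h3 _] /in_box [/= _ h4 _]]]] := nbhs_two hy.
have [ez [ez0 [/in_box [/= _ _ h5] /in_box [/= _ _ h6]]]] := nbhs_two hz.
move: h1 h2 h3 h4 h5 h6 => /andP[? ?] /andP[? ?] /andP[? ?] /andP[? ?] /andP[? ?] /andP[? ?].
split; apply/andP; split; lra.
Qed.

Lemma sqrt3_le (R : realType) (u v w : R) :
  Num.sqrt (u ^+ 2 + v ^+ 2 + w ^+ 2) <= `|u| + `|v| + `|w|.
Proof.
have h0 : 0 <= `|u| + `|v| + `|w| by rewrite !addr_ge0.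
rewrite -(ger0_norm h0) -sqrtr_sqr; apply: ler_wsqrtr.
rewrite -(real_normK (num_real u)) -(real_normK (num_real v)) -(real_normK (num_real w)).
have := normr_ge0 u; have := normr_ge0 v; have := normr_ge0 w.
set U := `|u|; set V := `|v|; set W := `|w| => hw hv hu.
rewrite !expr2; nra.
Qed.

Lemma box_bounded (R : realType) (x0 y0 z0 A B C : R) : 0 <= A -> 0 <= B -> 0 <= C ->
  bounded3 (box x0 y0 z0 A B C).
Proof.
move=> A0 B0 C0; exists ((x0, y0), z0), (A + B + C) => p /in_box [hx hy hz].
apply: le_trans (sqrt3_le _ _ _) _.
move: hx hy hz => /andP[? ?] /andP[? ?] /andP[? ?] /=.
rewrite (ler0_norm (x := x0 - _)); last lra.
rewrite (ler0_norm (x := y0 - _)); last lra.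
rewrite (ler0_norm (x := z0 - _)); last lra.
lra.
Qed.

Lemma fin_box (K : nat) :
  finite_set [set i : I3 | (`|i.1.1| <= K%:Z)%R /\ (`|i.1.2| <= K%:Z)%R /\ (`|i.2| <= K%:Z)%R].
Proof.
pose g (t : 'I_(K.*2.+1) * 'I_(K.*2.+1) * 'I_(K.*2.+1)) : I3 :=
  ((t.1.1%:Z - K%:Z, t.1.2%:Z - K%:Z), t.2%:Z - K%:Z).
apply: (sub_finite_set _ (finite_image g (@finite_finset _ setT))).
move=> [[m r] k] /= [h1 [h2 h3]].
exists ((inord (absz (m + K%:Z)), inord (absz (r + K%:Z))), inord (absz (k + K%:Z))) => //.
rewrite /g /= !inordK; try lia.
congr ((_, _), _); lia.
Qed.

Lemma lt_scaled (R : realType) (s L : R) (u v n : int) : 0 < s ->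
  s * u%:~R < s * v%:~R + L -> L = s * n%:~R -> u < v + n.
Proof. by move=> s0 h hL; move: h; rewrite hL -mulrDr ltr_pM2l // -intrD ltr_int. Qed.

Lemma floor_cover (R : realType) (s w : R) : 0 < s ->
  exists n : int, s * n%:~R <= w <= s * n%:~R + s.
Proof.
move=> s0; exists (Num.floor (w / s)).
have /andP[h1 h2] := floor_itv (w / s).
have ew : w = s * (w / s) by rewrite mulrC divfK // gt_eqF.
apply/andP; split.
- by rewrite [leRHS]ew ler_pM2l.
- rewrite [leLHS]ew -[X in _ + X]mulr1 -mulrDr ler_pM2l //.
  by rewrite intrD in h2; apply: ltW.
Qed.

Lemma strict_unique (R : realType) (i j : I3) (p : pt3 R) :
  xo R i < p.1.1 < xo R i + aa R -> yo R i < p.1.2 < yo R i + 1 ->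
  zo R i < p.2 < zo R i + cc R -> tile j p -> i = j.
Proof.
have c0 := cc_gt0 R; have [a0 _] := aa_facts R.
have e1 : cc R = cc R * (1:int)%:~R by rewrite mulr1.
have e2 : (1 : R) = 2^-1 * (2:int)%:~R by rewrite mulVf.
have e4 : aa R = aa R / 4 * (4:int)%:~R by rewrite divfK.
move=> /andP[hx1 hx2] /andP[hy1 hy2] /andP[hz1 hz2] /in_box [/andP[hx3 hx4] /andP[hy3 hy4] /andP[hz3 hz4]].
move: hx1 hx2 hy1 hy2 hz1 hz2 hx3 hx4 hy3 hy4 hz3 hz4.
case: i => [[m r] k]; case: j => [[m' r'] k']; rewrite /xo /yo /zo /= => hx1 hx2 hy1 hy2 hz1 hz2 hx3 hx4 hy3 hy4 hz3 hz4.
have h2 : (0 : R) < 2^-1 by rewrite invr_gt0.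
have a4 : (0 : R) < aa R / 4 by rewrite divr_gt0.
have k1 := lt_scaled c0 (lt_le_trans hz1 hz4) e1.
have k2 := lt_scaled c0 (le_lt_trans hz3 hz2) e1.
have y1 := lt_scaled h2 (lt_le_trans hy1 hy4) e2.
have y2 := lt_scaled h2 (le_lt_trans hy3 hy2) e2.
have x1 := lt_scaled a4 (lt_le_trans hx1 hx4) e4.
have x2 := lt_scaled a4 (le_lt_trans hx3 hx2) e4.
clear -k1 k2 y1 y2 x1 x2.
have kk : k = k' by lia.
have rr : r = r' by lia.
have mm : m = m' by lia.
by rewrite kk rr mm.
Qed.

Lemma tile_bdry (R : realType) (i j : I3) : i <> j ->
  @tile R i `&` tile j `<=` bdry (tile i) `&` bdry (tile j).
Proof.
move=> hij p [hi hj]; split; split; try exact: subset_closure.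
- move=> /interior_strict [h1 h2 h3]; exact: hij (strict_unique h1 h2 h3 hj).
- move=> /interior_strict [h1 h2 h3]; exact: hij (esym (strict_unique h1 h2 h3 hi)).
Qed.

Lemma tile_cover (R : realType) (p : pt3 R) : exists i, tile i p.
Proof.
have c0 := cc_gt0 R; have [a0 _] := aa_facts R.
have [k /andP[hk1 hk2]] := floor_cover p.2 c0.
have [r /andP[hr1 hr2]] := floor_cover (p.1.2 - 2^-1 * k%:~R) (ltr01 : (0:R) < 1).
have [m /andP[hm1 hm2]] := floor_cover (p.1.1 - aa R / 4 * (2 * r + k)%:~R) a0.
exists ((m, r), k); apply/in_box; rewrite /xo /yo /zo /=.
have e2 : ((2 * r + k)%:~R : R) = 2 * r%:~R + k%:~R by rewrite intrD intrM.
have e4 : ((4 * m + 2 * r + k)%:~R : R) = 4 * m%:~R + (2 * r + k)%:~R.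
  by rewrite -addrA intrD intrM.
rewrite e4 e2; rewrite e2 in hm1 hm2.
split; apply/andP; split.
- have h4 : aa R / 4 * (4 * m%:~R) = aa R * m%:~R by rewrite mulrA divfK.
  rewrite mulrDr h4; lra.
- have h4 : aa R / 4 * (4 * m%:~R) = aa R * m%:~R by rewrite mulrA divfK.
  rewrite mulrDr h4; lra.
- lra.
- lra.
- lra.
- lra.
Qed.

Lemma int_bound (R : realType) (s B : R) (n : int) : 0 < s ->
  - B <= s * n%:~R <= B -> `|n%:~R| <= B / s.
Proof.
move=> s0 h; rewrite ler_pdivlMr // mulrC -(gtr0_norm s0) -normrM.
by rewrite ler_norml.
Qed.

Lemma tile_locfin (R : realType) : locally_finite3 (@tile R).
Proof.
move=> x; exists 1; first exact: ltr01.
have c0 := cc_gt0 R; have c2 := cc_le R; have [a0 _] := aa_facts R.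
have h2 : (0 : R) < 2^-1 by rewrite invr_gt0.
have a4 : (0 : R) < aa R / 4 by rewrite divr_gt0.
pose Bk := (`|x.2| + 1 + cc R) / cc R.
pose BM := (`|x.1.2| + 2) / 2^-1.
pose BN := (`|x.1.1| + 1 + aa R) / (aa R / 4).
have Bk0 : 0 <= Bk by rewrite divr_ge0 // ?addr_ge0 // ltW.
have BM0 : 0 <= BM by rewrite divr_ge0 // ?addr_ge0 // ltW.
have BN0 : 0 <= BN by rewrite divr_ge0 // ?addr_ge0 // ltW.
pose K := Num.Def.archi_bound (Bk + BM + BN).
have hK := archi_boundP (addr_ge0 (addr_ge0 Bk0 BM0) BN0).
apply: (sub_finite_set _ (fin_box K)).
move=> [[m r] k] /= [p /in_box [/andP[hx1 hx2] /andP[hy1 hy2] /andP[hz1 hz2]] hd].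
move: hx1 hx2 hy1 hy2 hz1 hz2; rewrite /xo /yo /zo /= => hx1 hx2 hy1 hy2 hz1 hz2.
have := le_lt_trans (dist3_x x p) hd; rewrite ltr_norml => /andP[dx1 dx2].
have := le_lt_trans (dist3_y x p) hd; rewrite ltr_norml => /andP[dy1 dy2].
have := le_lt_trans (dist3_z x p) hd; rewrite ltr_norml => /andP[dz1 dz2].
have nx := ler_norm x.1.1; have nx' := lerNnormlW (lexx `|x.1.1|).
have ny := ler_norm x.1.2; have ny' := lerNnormlW (lexx `|x.1.2|).
have nz := ler_norm x.2; have nz' := lerNnormlW (lexx `|x.2|).
have bk : `|k%:~R| <= Bk by apply: int_bound => //; apply/andP; split; lra.
have bM : `|(2 * r + k)%:~R| <= BM by apply: int_bound => //; apply/andP; split; lra.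
have bN : `|(4 * m + 2 * r + k)%:~R| <= BN by apply: int_bound => //; apply/andP; split; lra.
have ik : (`|k| < K%:Z)%R.
  by rewrite -(ltr_int R) intr_norm; apply: le_lt_trans hK; lra.
have iM : (`|2 * r + k| < K%:Z)%R.
  by rewrite -(ltr_int R) intr_norm; apply: le_lt_trans hK; lra.
have iN : (`|4 * m + 2 * r + k| < K%:Z)%R.
  by rewrite -(ltr_int R) intr_norm; apply: le_lt_trans hK; lra.
clear -ik iM iN.
split; [lia|split; lia].
Qed.

Theorem mainTheorem13 (R : realType) :
  exists (I : Type) (T : I -> set (pt3 R)) (col : I -> 'I_4),
    [/\ tiling3 T,
        (forall i, vol3 (T i) = 1%E) &
        min_dist T col = (12 + 8 * Num.sqrt 2) `^ (- (3^-1))].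
Proof.
have c0 := cc_gt0 R; have [a0 _] := aa_facts R.
exists I3, (@tile R), col; split.
- split.
  + exact: tile_locfin.
  + move=> i; split; [|split].
    * by apply: closedX'; [apply: closedX'|]; apply: itv_closed.
    * by apply: box_bounded; apply: ltW.
    * by apply: connectedX'; [apply: connectedX'|]; apply: segment_connected.
  + exact: tile_cover.
  + exact: tile_bdry.
- move=> i; rewrite /tile vol_box ?ltr01 //.
  by rewrite mulr1 /aa mulVf // gt_eqF.
- exact: md.
Qed.
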